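(* If $f\colon X\to Y$ is an asymptotically Lipschitz function of metric spaces, then $\operatorname{asdim}_{AN}(X)\le \operatorname{asdim}_{AN}(f)+\operatorname{asdim}_{AN}(Y)$.
   Context: $f$ is asymptotically Lipschitz if there are constants $a,b\ge0$ with $d_Y(f(x),f(y))\le a\,d_X(x,y)+b$ for all $x,y$. For a metric space $X$, an $n$-dimensional control function is $D_X\colon\mathbb R_+\to\mathbb R_+$ such that for each $r>0$ there are families $\mathcal U_1,\dots,\mathcal U_{n+1}$ of subsets of $X$, each $r$-disjoint (points in different members at distance $\ge r$), with members of diameter $\le D_X(r)$, whose union covers $X$. $\operatorname{asdim}_{AN}(X)\le n$ iff $X$ has an $n$-dimensional control function of the form $D_X(r)=cr+b$ with $b,c\ge0$. For $r>0$, the $r$-components of $A\subset X$ are the classes of points of $A$ joined by finite sequences in $A$ with consecutive distances $\le r$. An $m$-dimensional control function of $f$ is $D_f\colon\mathbb R_+\times\mathbb R_+\to\mathbb R_+$ such that for all $r_X,R_Y>0$ every $A\subset X$ with $\operatorname{diam} f(A)\le R_Y$ is a union of $m+1$ sets whose $r_X$-components have diameter $\le D_f(r_X,R_Y)$. $\operatorname{asdim}_{AN}(f)$ is the minimal $m$ for which $f$ has an $m$-dimensional control function of the form $D_f(r_X,R_Y)=a r_X+bR_Y+c$ (constants $a,b,c$). *)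

(* Defs.v *)
From Stdlib Require Import Reals Relations.
Open Scope R_scope.

Record MetricSpace := {
  carrier :> Type;
  dist : carrier -> carrier -> R;
  dist_nonneg : forall x y, 0 <= dist x y;
  dist_eq0 : forall x y, dist x y = 0 <-> x = y;
  dist_sym : forall x y, dist x y = dist y x;
  dist_tri : forall x y z, dist x z <= dist x y + dist y z
}.

Arguments dist {m} _ _.

Definition asymp_lipschitz {X Y : MetricSpace} (f : X -> Y) : Prop :=
  exists a b, 0 <= a /\ 0 <= b /\
    forall x y, dist (f x) (f y) <= a * dist x y + b.

Definition diam_le {X : MetricSpace} (A : X -> Prop) (D : R) : Prop :=
  forall x y, A x -> A y -> dist x y <= D.

Definition r_disjoint {X : MetricSpace} (r : R) (U : (X -> Prop) -> Prop) : Prop :=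
  forall A B, U A -> U B -> A <> B ->
    forall x y, A x -> B y -> r <= dist x y.

Definition control_fun {X : MetricSpace} (n : nat) (D : R -> R) : Prop :=
  (forall r, 0 <= r -> 0 <= D r) /\
  forall r, 0 < r ->
    exists U : nat -> ((X -> Prop) -> Prop),
      (forall i, (i <= n)%nat -> r_disjoint r (U i)) /\
      (forall i A, (i <= n)%nat -> U i A -> diam_le A (D r)) /\
      (forall x : X, exists i A, (i <= n)%nat /\ U i A /\ A x).

Definition asdimAN_le (X : MetricSpace) (n : nat) : Prop :=
  exists c b, 0 <= c /\ 0 <= b /\ @control_fun X n (fun r => c * r + b).

Definition r_step {X : MetricSpace} (A : X -> Prop) (r : R) : relation X :=
  fun x y => A x /\ A y /\ dist x y <= r.

Definition same_r_component {X : MetricSpace} (A : X -> Prop) (r : R) (x y : X) : Prop :=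
  A x /\ A y /\ clos_refl_trans X (r_step A r) x y.

Definition r_components_diam_le {X : MetricSpace} (A : X -> Prop) (r D : R) : Prop :=
  forall x y, same_r_component A r x y -> dist x y <= D.

Definition map_control_fun {X Y : MetricSpace} (f : X -> Y) (m : nat)
    (Df : R -> R -> R) : Prop :=
  (forall rX RY, 0 <= rX -> 0 <= RY -> 0 <= Df rX RY) /\
  forall rX RY, 0 < rX -> 0 < RY ->
    forall A : X -> Prop,
      diam_le (fun y => exists x, A x /\ f x = y) RY ->
      exists B : nat -> (X -> Prop),
        (forall x, A x <-> exists i, (i <= m)%nat /\ B i x) /\
        (forall i, (i <= m)%nat -> r_components_diam_le (B i) rX (Df rX RY)).

Definition asdimAN_map_le {X Y : MetricSpace} (f : X -> Y) (m : nat) : Prop :=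
  exists a b c, 0 <= a /\ 0 <= b /\ 0 <= c /\
    map_control_fun f m (fun rX RY => a * rX + b * RY + c).

(* Main.v *)
Require Import Defs.
From Stdlib Require Import Reals.
From Stdlib Require Import Lra Lia Psatz Relations Classical ClassicalEpsilon FunctionalExtensionality PropExtensionality.
Import Defs.
Open Scope R_scope.

Lemma crt_mono (X : MetricSpace) (A B : X -> Prop) s s' x y : (forall u, A u -> B u) -> s <= s' ->
  clos_refl_trans X (r_step A s) x y -> clos_refl_trans X (r_step B s') x y.
Proof.
  intros HAB Hs H; induction H as [x y [? [? ?]]| |].
  - apply rt_step; repeat split; auto; lra.
  - apply rt_refl.
  - eapply rt_trans; eauto.
Qed.

Lemma crt_end (X : MetricSpace) (A : X -> Prop) s x y :
  clos_refl_trans X (r_step A s) x y -> A x -> A y.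
Proof. intros H; induction H as [x y [? [? ?]]| |]; auto. Qed.

Lemma crt_sym (X : MetricSpace) (A : X -> Prop) s x y :
  clos_refl_trans X (r_step A s) x y -> clos_refl_trans X (r_step A s) y x.
Proof.
  intros H; induction H as [x y [? [? ?]]| |].
  - apply rt_step; repeat split; auto. rewrite dist_sym; auto.
  - apply rt_refl.
  - eapply rt_trans; eauto.
Qed.

Lemma crt_mono_reach (X : MetricSpace) (A B : X -> Prop) s x y :
  clos_refl_trans X (r_step A s) x y ->
  (forall u, clos_refl_trans X (r_step A s) x u -> A u -> B u) ->
  clos_refl_trans X (r_step B s) x y.
Proof.
  intros H; apply clos_rt_rtn1_iff in H.
  induction H as [|y z Hyz Hxy IH]; intros HB.
  - apply rt_refl.
  - assert (Hxy' : clos_refl_trans X (r_step A s) x y) by (apply clos_rt_rtn1_iff; auto).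
    destruct Hyz as [Ay [Az dyz]].
    eapply rt_trans. apply IH; intros; auto.
    apply rt_step; repeat split; auto.
    eapply HB; auto. eapply rt_trans; [exact Hxy'|apply rt_step; repeat split; auto].
Qed.

Lemma dist_refl0 (X : MetricSpace) (x : X) : dist x x = 0.
Proof. apply dist_eq0; auto. Qed.

Lemma nbhd_chain (X : MetricSpace) (S F F' : X -> Prop) (s t : R) :
  (forall y z, F y -> dist y z <= t -> S z -> F' z) ->
  forall x y, clos_refl_trans_1n X (r_step (fun u => (exists z, S z /\ dist u z <= t) /\ F u) s) x y ->
  forall z0, S z0 -> dist x z0 <= t ->
  exists z', S z' /\ dist y z' <= t /\
    clos_refl_trans X (r_step (fun u => S u /\ F' u) (s + 2 * t)) z0 z'.
Proof.
  intros HF x y H; induction H as [x|x x1 y Hs Hr IH]; intros z0 Sz0 dz0.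
  - exists z0; repeat split; auto. apply rt_refl.
  - destruct Hs as [[_ Fx] [[[z1 [Sz1 dz1]] Fx1] dxx1]].
    destruct (IH z1 Sz1 dz1) as [z' [Sz' [dz' Hc]]].
    exists z'; repeat split; auto.
    eapply rt_trans; [|exact Hc].
    apply rt_step; repeat split; auto.
    + eapply HF; [exact Fx| |exact Sz0]; lra.
    + eapply HF; [exact Fx1| |exact Sz1]; lra.
    + pose proof (dist_tri X z0 x z1); pose proof (dist_tri X x x1 z1).
      rewrite (dist_sym X z0 x) in *. lra.
Qed.


Definition ind (P : Prop) : nat := if excluded_middle_informative P then 0%nat else 1%nat.
Fixpoint miss (P : nat -> Prop) (q : nat) : nat :=
  match q with O => ind (P O) | S q' => (miss P q' + ind (P (S q')))%nat end.

Lemma ind_le1 P : (ind P <= 1)%nat.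
Proof. unfold ind; destruct excluded_middle_informative; lia. Qed.
Lemma ind_true (P : Prop) : P -> ind P = 0%nat.
Proof. unfold ind; destruct excluded_middle_informative; tauto. Qed.
Lemma ind_false (P : Prop) : ~ P -> ind P = 1%nat.
Proof. unfold ind; destruct excluded_middle_informative; tauto. Qed.

Lemma miss_le P q : (miss P q <= S q)%nat.
Proof. induction q; simpl; pose proof (ind_le1 (P O)); try pose proof (ind_le1 (P (S q))); lia. Qed.

Lemma miss_le_q P q : (exists l, (l <= q)%nat /\ P l) -> (miss P q <= q)%nat.
Proof.
  induction q as [|q IH]; intros [l [Hl Pl]]; simpl.
  - assert (l = O) by lia; subst; rewrite ind_true; auto.
  - destruct (Nat.eq_dec l (S q)) as [->|Hne].
    + rewrite ind_true; auto. pose proof (miss_le P q); lia.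
    + assert (Hlq : (l <= q)%nat) by lia. pose proof (IH (ex_intro _ l (conj Hlq Pl))). pose proof (ind_le1 (P (S q))); lia.
Qed.

Lemma miss_none P q : (forall l, (l <= q)%nat -> ~ P l) -> miss P q = S q.
Proof.
  induction q as [|q IH]; intros H; simpl.
  - rewrite ind_false; auto.
  - rewrite IH, ind_false; [lia| |]; auto.
Qed.

Lemma miss_cover P q d : (miss P q <= d)%nat -> (d <= q)%nat -> exists l, (l <= q)%nat /\ P l.
Proof.
  intros H1 H2. apply NNPP; intro Hn.
  rewrite miss_none in H1; [lia|]. intros l Hl Pl; apply Hn; eauto.
Qed.

Lemma miss_mono P P' q : (forall l, (l <= q)%nat -> P l -> P' l) -> (miss P' q <= miss P q)%nat.
Proof.
  induction q as [|q IH]; intros H; simpl.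
  - unfold ind; do 2 destruct excluded_middle_informative; try lia. exfalso; eauto.
  - assert (Hq := IH (fun l Hl => H l ltac:(lia))).
    unfold ind; do 2 destruct excluded_middle_informative; try lia. exfalso; eauto.
Qed.

Lemma miss_strict P P' q j : (forall l, (l <= q)%nat -> P l -> P' l) -> (j <= q)%nat -> P' j -> ~ P j ->
  (S (miss P' q) <= miss P q)%nat.
Proof.
  induction q as [|q IH]; intros H Hj P'j Pj; simpl.
  - assert (j = O) by lia; subst. rewrite ind_true, ind_false; auto.
  - destruct (Nat.eq_dec j (S q)) as [->|Hne].
    + rewrite ind_true, ind_false; auto.
      pose proof (miss_mono P P' q (fun l Hl => H l ltac:(lia))); lia.
    + assert (Hq := IH (fun l Hl => H l ltac:(lia)) ltac:(lia) P'j Pj).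
      unfold ind; do 2 destruct excluded_middle_informative; try lia. exfalso; eauto.
Qed.

Lemma miss_pigeon P Q q : (forall l, (l <= q)%nat -> ~ (P l /\ Q l)) -> (S q <= miss P q + miss Q q)%nat.
Proof.
  induction q as [|q IH]; intros H; simpl.
  - unfold ind; do 2 destruct excluded_middle_informative; try lia. exfalso; eapply H; eauto.
  - assert (Hq := IH (fun l Hl => H l ltac:(lia))).
    unfold ind; do 2 destruct excluded_middle_informative; try lia. exfalso; eapply (H (S q)); eauto.
Qed.


Definition newcol (X : MetricSpace) (Z : nat -> X -> Prop) (q : nat) (t : R) : X -> Prop :=
  fun x => forall j, (j <= q)%nat -> (exists z, Z j z /\ dist x z <= t) -> Z j x.

Lemma newcol_chain (X : MetricSpace) (Z : nat -> X -> Prop) q t s (F : X -> Prop) j :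
  s <= t -> (j <= q)%nat -> forall x y,
  clos_refl_trans_1n X (r_step (fun u => newcol X Z q t u /\ F u) s) x y -> Z j x ->
  clos_refl_trans X (r_step (fun u => Z j u /\ F u) s) x y.
Proof.
  intros Hst Hj x y H; induction H as [x|x x1 y Hs Hr IH]; intros Zx.
  - apply rt_refl.
  - destruct Hs as [[_ Fx] [[N1 Fx1] d]].
    assert (Z1 : Z j x1).
    { apply N1; auto. exists x; split; auto. rewrite dist_sym; lra. }
    eapply rt_trans; [apply rt_step; repeat split; eauto|]; auto.
Qed.

Definition rel {X Y : MetricSpace} (f : X -> Y) (S : X -> Prop) (s rho E : R) : Prop :=
  forall W : Y -> Prop, diam_le W rho -> forall x y,
    clos_refl_trans X (r_step (fun u => S u /\ W (f u)) s) x y -> dist x y <= E.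

Definition bp {X Y : MetricSpace} (f : X -> Y) (S : X -> Prop) (s E : R) : Prop :=
  forall x y, clos_refl_trans X (r_step S s) x y -> dist (f x) (f y) <= E.

Lemma union_rel (X Y : MetricSpace) (f : X -> Y) S T sig tau rho ES ET :
  0 <= tau -> 0 <= ET -> 0 <= ES -> ET + 2*tau <= sig ->
  rel f S sig rho ES -> rel f T tau rho ET ->
  rel f (fun u => S u \/ T u) tau rho (ES + 2*ET + 2*tau).
Proof.
  intros Ht HET HES Hsig HS HT W HW.
  set (SF := fun u => S u /\ W (f u)).
  set (TF := fun u => T u /\ W (f u)).
  set (U := fun u => (S u \/ T u) /\ W (f u)).
  assert (BT : forall x y, clos_refl_trans X (r_step TF tau) x y -> dist x y <= ET)
    by (intros; eapply HT; eauto).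
  assert (BS : forall x y, clos_refl_trans X (r_step SF sig) x y -> dist x y <= ES)
    by (intros; eapply HS; eauto).
  set (pre := fun x s1 => x = s1 \/ exists t, TF x /\ clos_refl_trans X (r_step TF tau) x t /\ dist t s1 <= tau).
  set (post := fun s2 y => s2 = y \/ exists t, TF t /\ dist s2 t <= tau /\ clos_refl_trans X (r_step TF tau) t y).
  assert (Inv : forall x y, clos_refl_trans_1n X (r_step U tau) x y -> U y ->
    (TF x /\ clos_refl_trans X (r_step TF tau) x y) \/
    exists s1 s2, SF s1 /\ SF s2 /\ clos_refl_trans X (r_step SF sig) s1 s2 /\ pre x s1 /\ post s2 y).
  { intros x y H; induction H as [y|x x1 y Hs Hr IH]; intros Uy.
    - destruct Uy as [[Sy|Ty] Wy].
      + right; exists y, y; split; [split; auto|]; split; [split; auto|]; split; [apply rt_refl|]; split; left; auto.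
      + left; split; [split; auto|apply rt_refl].
    - destruct Hs as [[[Sx|Tx] Wx] [[_ Wx1] dxx1]]; destruct (IH Uy) as [[TFx1 Ha]|[s1 [s2 [SF1 [SF2 [C12 [Pre Post]]]]]]].
      + right; exists x, x; split; [split; auto|]; split; [split; auto|]; split; [apply rt_refl|]; split; [left; auto|].
        right; exists x1; split; [exact TFx1|split; auto].
      + right; exists x, s2; split; [split; auto|]; split; [exact SF2|]; split; [|split; [left; reflexivity|exact Post]].
        eapply rt_trans; [|exact C12]. apply rt_step; repeat split; auto; try apply SF1.
        destruct Pre as [<-|[t [TFx1 [Ct dt]]]]; [lra|].
        pose proof (BT _ _ Ct). pose proof (dist_tri X x x1 t); pose proof (dist_tri X x t s1); lra.
      + left; split; [split; auto|]. eapply rt_trans; [|exact Ha]. apply rt_step; repeat split; auto; apply TFx1.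
      + right; exists s1, s2; split; [exact SF1|]; split; [exact SF2|]; split; [exact C12|]; split; [|exact Post]. right.
        destruct Pre as [<-|[t [TFx1 [Ct dt]]]].
        * exists x; split; [split; auto|]; split; [apply rt_refl|auto].
        * exists t; split; [split; auto|]; split; [|auto]. eapply rt_trans; [|exact Ct]. apply rt_step; repeat split; auto; apply TFx1. }
  intros x y H. apply clos_rt_rt1n_iff in H. destruct H as [|x1 y Hs Hr].
  { rewrite dist_refl0; lra. }
  assert (Uy : U y).
  { eapply crt_end; [apply clos_rt_rt1n_iff; exact Hr|apply Hs]. }
  destruct (Inv x y (Relation_Operators.rt1n_trans _ _ _ _ _ Hs Hr) Uy) as [[_ Ha]|[s1 [s2 [SF1 [SF2 [C12 [Pre Post]]]]]]].
  - pose proof (BT _ _ Ha); lra.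
  - assert (d1 : dist x s1 <= ET + tau).
    { destruct Pre as [<-|[t [_ [Ct dt]]]]; [rewrite dist_refl0; lra|].
      pose proof (BT _ _ Ct); pose proof (dist_tri X x t s1); lra. }
    assert (d2 : dist s2 y <= ET + tau).
    { destruct Post as [<-|[t [_ [dt Ct]]]]; [rewrite dist_refl0; lra|].
      pose proof (BT _ _ Ct); pose proof (dist_tri X s2 t y); lra. }
    pose proof (BS _ _ C12). pose proof (dist_tri X x s1 y); pose proof (dist_tri X s1 s2 y); lra.
Qed.


Definition BaseCol (X Y : MetricSpace) (f : X -> Y) (d q : nat) : Prop :=
  exists al be, 0 <= al /\ 0 <= be /\ forall r, 0 < r ->
    exists Q : nat -> X -> Prop, (forall x, (miss (fun l => Q l x) q <= d)%nat) /\
      forall l, (l <= q)%nat -> bp f (Q l) r (al * r + be).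

Definition FibCol (X Y : MetricSpace) (f : X -> Y) (d q : nat) : Prop :=
  exists al be ga, 0 <= al /\ 0 <= be /\ 0 <= ga /\ forall r rho, 0 < r -> 0 < rho ->
    exists C : nat -> X -> Prop, (forall x, (miss (fun l => C l x) q <= d)%nat) /\
      forall l, (l <= q)%nat -> rel f (C l) r rho (al * r + be * rho + ga).

Definition recol (X : MetricSpace) (Q : nat -> X -> Prop) (q : nat) (t : R) : nat -> X -> Prop :=
  fun l x => ((l <= q)%nat /\ exists z, Q l z /\ dist x z <= t) \/ (l = S q /\ newcol X Q q t x).

Lemma recol_miss (X : MetricSpace) (Q : nat -> X -> Prop) q t d x : 0 <= t ->
  (miss (fun l => Q l x) q <= d)%nat -> (miss (fun l => recol X Q q t l x) (S q) <= d)%nat.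
Proof.
  intros Ht H. simpl.
  assert (Hmono : forall l, (l <= q)%nat -> Q l x -> recol X Q q t l x).
  { intros l Hl Ql; left; split; auto; exists x; split; auto; rewrite dist_refl0; lra. }
  destruct (classic (newcol X Q q t x)) as [N|N].
  - rewrite ind_true; [|right; split; auto].
    pose proof (miss_mono _ _ q Hmono); lia.
  - unfold newcol in N.
    apply not_all_ex_not in N; destruct N as [j N].
    apply imply_to_and in N; destruct N as [Hj N].
    apply imply_to_and in N; destruct N as [Hz N].
    pose proof (miss_strict _ _ q j Hmono Hj ltac:(left; split; auto) N).
    pose proof (ind_le1 (recol X Q q t (S q) x)). lia.
Qed.

Lemma recol_lo (X : MetricSpace) Q q t l x : (l <= q)%nat -> recol X Q q t l x -> exists z, Q l z /\ dist x z <= t.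
Proof. intros Hl [[_ H]|[-> _]]; auto; lia. Qed.
Lemma recol_hi (X : MetricSpace) Q q t x : recol X Q q t (S q) x -> newcol X Q q t x.
Proof. intros [[Hl _]|[_ H]]; auto; lia. Qed.

Lemma base_step (X Y : MetricSpace) (f : X -> Y) a b d q :
  0 <= a -> 0 <= b -> (forall x y, dist (f x) (f y) <= a * dist x y + b) ->
  (d <= q)%nat -> BaseCol X Y f d q -> BaseCol X Y f d (S q).
Proof.
  intros Ha Hb Hf Hdq [al [be [Hal [Hbe H]]]].
  exists (3 * al + 2 * a), (be + 2 * b); split; [lra|split; [lra|]].
  intros r Hr. destruct (H (3 * r) ltac:(lra)) as [Q [HQm HQb]].
  exists (recol X Q q r); split.
  { intros x; apply recol_miss; auto; lra. }
  intros l Hl x y Hc. apply clos_rt_rt1n_iff in Hc. destruct Hc as [|x1 y Hs Hr1].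
  { rewrite dist_refl0. nra. }
  destruct (Nat.eq_dec l (S q)) as [->|Hne].
  - pose proof (recol_hi X Q q r x (proj1 Hs)) as Nx.
    destruct (miss_cover _ _ _ (HQm x) Hdq) as [j [Hj Qjx]].
    assert (Hc : clos_refl_trans_1n X (r_step (fun u => newcol X Q q r u /\ True) r) x y).
    { apply clos_rt_rt1n_iff. eapply crt_mono; [| |apply clos_rt_rt1n_iff; eapply Relation_Operators.rt1n_trans; eauto].
      - intros u Hu; split; auto; apply recol_hi; auto.
      - lra. }
    pose proof (newcol_chain X Q q r r (fun _ => True) j ltac:(lra) Hj x y Hc Qjx) as Hc2.
    assert (Hc3 : clos_refl_trans X (r_step (Q j) (3 * r)) x y).
    { eapply crt_mono; [| |exact Hc2]; [intros u [? ?]; auto|lra]. }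
    pose proof (HQb j Hj x y Hc3). nra.
  - assert (Hlq : (l <= q)%nat) by lia.
    destruct (recol_lo X Q q r l x Hlq (proj1 Hs)) as [z0 [Qz0 dz0]].
    assert (Hc : clos_refl_trans_1n X (r_step (fun u => (exists z, Q l z /\ dist u z <= r) /\ True) r) x y).
    { apply clos_rt_rt1n_iff. eapply crt_mono; [| |apply clos_rt_rt1n_iff; eapply Relation_Operators.rt1n_trans; eauto].
      - intros u Hu; split; auto; apply (recol_lo X Q q r l u Hlq Hu).
      - lra. }
    destruct (nbhd_chain X (Q l) (fun _ => True) (fun _ => True) r r ltac:(auto) x y Hc z0 Qz0 dz0)
      as [z' [Qz' [dz' Hc2]]].
    assert (Hc3 : clos_refl_trans X (r_step (Q l) (3 * r)) z0 z').
    { eapply crt_mono; [| |exact Hc2]; [intros u [? ?]; auto|lra]. }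
    pose proof (HQb l Hlq z0 z' Hc3).
    pose proof (Hf x z0); pose proof (Hf y z').
    pose proof (dist_tri Y (f x) (f z0) (f y)); pose proof (dist_tri Y (f z0) (f z') (f y)).
    rewrite (dist_sym Y (f z') (f y)) in *.
    assert (a * dist x z0 <= a * r) by (apply Rmult_le_compat_l; auto).
    assert (a * dist y z' <= a * r) by (apply Rmult_le_compat_l; auto).
    nra.
Qed.

Lemma fib_step (X Y : MetricSpace) (f : X -> Y) a b d q :
  0 <= a -> 0 <= b -> (forall x y, dist (f x) (f y) <= a * dist x y + b) ->
  (d <= q)%nat -> FibCol X Y f d q -> FibCol X Y f d (S q).
Proof.
  intros Ha Hb Hf Hdq [al [be [ga [Hal [Hbe [Hga H]]]]]].
  assert (Hab : 0 <= a * be) by (apply Rmult_le_pos; auto).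
  assert (Hbb : 0 <= b * be) by (apply Rmult_le_pos; auto).
  exists (3 * al + 2 * a * be + 2), be, (2 * b * be + ga); split; [nra|split; [lra|split; [nra|]]].
  intros r rho Hr Hrho.
  destruct (H (3 * r) (rho + 2 * (a * r + b)) ltac:(lra) ltac:(nra)) as [C [HCm HCb]].
  exists (recol X C q r); split.
  { intros x; apply recol_miss; auto; lra. }
  intros l Hl W HW x y Hc. apply clos_rt_rt1n_iff in Hc. destruct Hc as [|x1 y Hs Hr1].
  { rewrite dist_refl0. assert (0 <= a * be * r) by (apply Rmult_le_pos; lra).
    assert (0 <= be * rho) by (apply Rmult_le_pos; lra). assert (0 <= al * r) by (apply Rmult_le_pos; lra). nra. }
  assert (HW' : diam_le W (rho + 2 * (a * r + b))).
  { intros u v Hu Hv; pose proof (HW u v Hu Hv); nra. }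
  destruct (Nat.eq_dec l (S q)) as [->|Hne].
  - pose proof (recol_hi X C q r x (proj1 (proj1 Hs))) as Nx.
    destruct (miss_cover _ _ _ (HCm x) Hdq) as [j [Hj Cjx]].
    assert (Hc : clos_refl_trans_1n X (r_step (fun u => newcol X C q r u /\ W (f u)) r) x y).
    { apply clos_rt_rt1n_iff. eapply crt_mono; [| |apply clos_rt_rt1n_iff; eapply Relation_Operators.rt1n_trans; eauto].
      - intros u Hu; split; [|apply Hu]; apply recol_hi; apply Hu.
      - lra. }
    pose proof (newcol_chain X C q r r (fun u => W (f u)) j ltac:(lra) Hj x y Hc Cjx) as Hc2.
    assert (Hc3 : clos_refl_trans X (r_step (fun u => C j u /\ W (f u)) (3 * r)) x y).
    { eapply crt_mono; [| |exact Hc2]; [intros u Hu; exact Hu|lra]. }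
    pose proof (HCb j Hj W HW' x y Hc3). nra.
  - assert (Hlq : (l <= q)%nat) by lia.
    destruct (recol_lo X C q r l x Hlq (proj1 (proj1 Hs))) as [z0 [Cz0 dz0]].
    assert (Hc : clos_refl_trans_1n X (r_step (fun u => (exists z, C l z /\ dist u z <= r) /\ W (f u)) r) x y).
    { apply clos_rt_rt1n_iff. eapply crt_mono; [| |apply clos_rt_rt1n_iff; eapply Relation_Operators.rt1n_trans; eauto].
      - intros u Hu; split; [|apply Hu]; apply (recol_lo X C q r l u Hlq (proj1 Hu)).
      - lra. }
    set (W' := fun v => exists w, W w /\ dist v w <= a * r + b).
    assert (HF : forall y z, W (f y) -> dist y z <= r -> C l z -> W' (f z)).
    { intros u z Wu duz _. exists (f u); split; auto. rewrite dist_sym.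
      pose proof (Hf u z). assert (a * dist u z <= a * r) by (apply Rmult_le_compat_l; auto). lra. }
    destruct (nbhd_chain X (C l) (fun u => W (f u)) (fun u => W' (f u)) r r HF x y Hc z0 Cz0 dz0)
      as [z' [Cz' [dz' Hc2]]].
    assert (HW'' : diam_le W' (rho + 2 * (a * r + b))).
    { intros u v [w1 [Hw1 d1]] [w2 [Hw2 d2]]. pose proof (HW w1 w2 Hw1 Hw2).
      pose proof (dist_tri Y u w1 v); pose proof (dist_tri Y w1 w2 v). rewrite (dist_sym Y w2 v) in *. lra. }
    assert (Hc3 : clos_refl_trans X (r_step (fun u => C l u /\ W' (f u)) (3 * r)) z0 z').
    { eapply crt_mono; [| |exact Hc2]; [intros u Hu; exact Hu|lra]. }
    pose proof (HCb l Hlq W' HW'' z0 z' Hc3).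
    pose proof (dist_tri X x z0 y); pose proof (dist_tri X z0 z' y).
    rewrite (dist_sym X z' y) in *. nra.
Qed.


Lemma rel_mono_E (X Y : MetricSpace) (f : X -> Y) S s rho E E' : E <= E' -> rel f S s rho E -> rel f S s rho E'.
Proof. intros H HS W HW x y Hc; pose proof (HS W HW x y Hc); lra. Qed.

Lemma crt_empty (X : MetricSpace) (A : X -> Prop) s x y : (forall u, ~ A u) ->
  clos_refl_trans X (r_step A s) x y -> x = y.
Proof. intros HA H; induction H as [x y [Ax _]| |]; [exfalso; eapply HA; eauto|auto|congruence]. Qed.

Definition RelDecK (X Y : MetricSpace) (f : X -> Y) (m : nat) (cY bY : R) (k : nat) : Prop :=
  exists al be ga, 0<=al /\ 0<=be /\ 0<=ga /\ forall r rho, 0 < r -> 0 < rho ->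
   forall U : nat -> ((Y -> Prop) -> Prop),
    (forall j, (j < k)%nat -> r_disjoint (rho + 1) (U j) /\ forall V, U j V -> diam_le V (cY * (rho+1) + bY)) ->
    exists B : nat -> X -> Prop,
      (forall x, (exists j V, (j < k)%nat /\ U j V /\ V (f x)) -> exists i, (i <= m)%nat /\ B i x) /\
      forall i, (i <= m)%nat -> rel f (B i) r rho (al * r + be * rho + ga).

Lemma reldec0 (X Y : MetricSpace) (f : X -> Y) m cY bY : RelDecK X Y f m cY bY 0.
Proof.
  exists 0, 0, 0; split; [lra|split; [lra|split; [lra|]]].
  intros r rho Hr Hrho U HU. exists (fun _ _ => False); split.
  - intros x [j [V [Hj _]]]; lia.
  - intros i Hi W HW x y Hc. apply crt_empty in Hc; [subst; rewrite dist_refl0; lra|].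
    intros u [[] _].
Qed.

Lemma reldec_step (X Y : MetricSpace) (f : X -> Y) m cY bY k ma mb mc :
  0 <= cY -> 0 <= bY -> 0 <= ma -> 0 <= mb -> 0 <= mc ->
  map_control_fun f m (fun rX RY => ma * rX + mb * RY + mc) ->
  RelDecK X Y f m cY bY k -> RelDecK X Y f m cY bY (S k).
Proof.
  intros HcY HbY Hma Hmb Hmc [_ HM] [al [be [ga [Hal [Hbe [Hga IH]]]]]].
  exists (ma * al + 2 * ma + 2 * al + 2), (ma * be + mb * cY + 2 * be),
    (ma * ga + mb * (cY + bY + 1) + mc + 2 * ga).
  assert (0 <= ma * al) by (apply Rmult_le_pos; auto).
  assert (0 <= ma * be) by (apply Rmult_le_pos; auto).
  assert (0 <= ma * ga) by (apply Rmult_le_pos; auto).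
  assert (0 <= mb * cY) by (apply Rmult_le_pos; auto).
  assert (0 <= mb * (cY + bY + 1)) by (apply Rmult_le_pos; lra).
  split; [lra|split; [lra|split; [lra|]]].
  intros r rho Hr Hrho U HU.
  destruct (IH r rho Hr Hrho U (fun j Hj => HU j ltac:(lia))) as [Bo [HBoc HBob]].
  set (ET := al * r + be * rho + ga).
  assert (HET : 0 <= ET) by (unfold ET; assert (0 <= al * r) by (apply Rmult_le_pos; lra);
    assert (0 <= be * rho) by (apply Rmult_le_pos; lra); lra).
  set (sig := ET + 2 * r).
  set (D := cY * (rho + 1) + bY).
  assert (HD : 0 <= D) by (unfold D; assert (0 <= cY * (rho + 1)) by (apply Rmult_le_pos; lra); lra).
  set (ES := ma * sig + mb * (D + 1) + mc).
  assert (HES : 0 <= ES) by (unfold ES, sig; assert (0 <= ma * (ET + 2 * r)) by (apply Rmult_le_pos; lra);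
    assert (0 <= mb * (D + 1)) by (apply Rmult_le_pos; lra); lra).
  destruct (HU k ltac:(lia)) as [Hdisj Hdiam].
  assert (Hex : forall V : Y -> Prop, exists Bv : nat -> X -> Prop, U k V ->
    (forall x, V (f x) <-> exists i, (i <= m)%nat /\ Bv i x) /\
    (forall i, (i <= m)%nat -> r_components_diam_le (Bv i) sig ES)).
  { intros V. destruct (classic (U k V)) as [HV|HV]; [|exists (fun _ _ => False); tauto].
    assert (Hd : diam_le (fun y => exists x, V (f x) /\ f x = y) (D + 1)).
    { intros y1 y2 [x1 [V1 <-]] [x2 [V2 <-]]. pose proof (Hdiam V HV (f x1) (f x2) V1 V2). unfold D; lra. }
    destruct (HM sig (D + 1) ltac:(unfold sig; lra) ltac:(lra) (fun x => V (f x)) Hd) as [Bv [HB1 HB2]].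
    exists Bv; intros _; split; auto. }
  set (Bsel := fun V => proj1_sig (constructive_indefinite_description _ (Hex V))).
  assert (HBsel : forall V, U k V -> (forall x, V (f x) <-> exists i, (i <= m)%nat /\ Bsel V i x) /\
    (forall i, (i <= m)%nat -> r_components_diam_le (Bsel V i) sig ES)).
  { intros V HV; exact (proj2_sig (constructive_indefinite_description _ (Hex V)) HV). }
  set (Sn := fun i x => exists V, U k V /\ V (f x) /\ Bsel V i x).
  exists (fun i x => Sn i x \/ Bo i x); split.
  - intros x [j [V [Hj [HV Vx]]]].
    destruct (Nat.eq_dec j k) as [->|Hne].
    + destruct (proj1 (proj1 (HBsel V HV) x) Vx) as [i [Hi Bi]].
      exists i; split; auto; left; exists V; auto.
    + assert (Hjk : (j < k)%nat) by lia.
      destruct (HBoc x (ex_intro _ j (ex_intro _ V (conj Hjk (conj HV Vx))))) as [i [Hi Bi]].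
      exists i; split; auto.
  - intros i Hi.
    assert (HSn : rel f (Sn i) sig rho ES).
    { intros W HW x y Hc. apply clos_rt_rt1n_iff in Hc. destruct Hc as [|x1 y Hs Hr1].
      { rewrite dist_refl0; lra. }
      pose proof Hs as Hs0. destruct Hs0 as [[[V0 [HV0 [V0x B0x]]] Wx] _].
      assert (Hin : forall u, Sn i u /\ W (f u) -> Bsel V0 i u).
      { intros u [[V [HV [Vu Bu]]] Wu].
        destruct (classic (V = V0)) as [->|Hne]; auto.
        exfalso. pose proof (Hdisj V0 V HV0 HV (fun e => Hne (eq_sym e)) (f x) (f u) V0x Vu).
        pose proof (HW (f x) (f u) Wx Wu). lra. }
      assert (Hc : clos_refl_trans X (r_step (Bsel V0 i) sig) x y).
      { eapply crt_mono; [exact Hin|apply Rle_refl|].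
        apply clos_rt_rt1n_iff; eapply Relation_Operators.rt1n_trans; eauto. }
      apply (proj2 (HBsel V0 HV0) i Hi). split; [auto|split; [eapply crt_end; eauto|auto]]. }
    eapply rel_mono_E; [|apply (union_rel X Y f (Sn i) (Bo i) sig r rho ES ET); auto; try lra; unfold sig; lra].
    unfold ES, sig, ET, D. nra.
Qed.


Lemma fib_init (X Y : MetricSpace) (f : X -> Y) m n :
  asdimAN_map_le f m -> asdimAN_le Y n -> FibCol X Y f m m.
Proof.
  intros [ma [mb [mc [Hma [Hmb [Hmc HM]]]]]] [cY [bY [HcY [HbY [_ HY]]]]].
  assert (HR : forall k, RelDecK X Y f m cY bY k).
  { induction k; [apply reldec0|apply (reldec_step X Y f m cY bY k ma mb mc); auto]. }
  destruct (HR (S n)) as [al [be [ga [Hal [Hbe [Hga H]]]]]].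
  exists al, be, ga; split; [auto|split; [auto|split; [auto|]]].
  intros r rho Hr Hrho.
  destruct (HY (rho + 1) ltac:(lra)) as [U [HUd [HUdiam HUc]]].
  destruct (H r rho Hr Hrho U) as [B [HBc HBr]].
  { intros j Hj; split; [apply HUd; lia|intros V HV; apply (HUdiam j V); auto; lia]. }
  exists B; split; auto.
  intros x. apply miss_le_q. apply HBc.
  destruct (HUc (f x)) as [i [A [Hi [HA Ax]]]]. exists i, A; repeat split; auto; lia.
Qed.

Lemma base_init (X Y : MetricSpace) (f : X -> Y) a b n :
  0 <= a -> 0 <= b -> (forall x y, dist (f x) (f y) <= a * dist x y + b) ->
  asdimAN_le Y n -> BaseCol X Y f n n.
Proof.
  intros Ha Hb Hf [cY [bY [HcY [HbY [_ HY]]]]].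
  exists (cY * a), (cY * (b + 1) + bY).
  assert (0 <= cY * a) by (apply Rmult_le_pos; auto).
  assert (0 <= cY * (b + 1)) by (apply Rmult_le_pos; lra).
  split; [auto|split; [lra|]].
  intros r Hr.
  set (R0 := a * r + b + 1).
  destruct (HY R0 ltac:(unfold R0; nra)) as [U [HUd [HUdiam HUc]]].
  exists (fun j x => exists V, U j V /\ V (f x)); split.
  - intros x. apply miss_le_q. destruct (HUc (f x)) as [i [A [Hi [HA Ax]]]]. exists i; split; auto; exists A; auto.
  - intros l Hl x y Hc. apply clos_rt_rt1n_iff in Hc.
    destruct Hc as [|x1 y Hs Hr1].
    { rewrite dist_refl0. assert (0 <= cY * a * r) by (apply Rmult_le_pos; lra). lra. }
    assert (Hprop : forall u v, clos_refl_trans_1n X (r_step (fun x => exists V, U l V /\ V (f x)) r) u v ->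
      forall V0, U l V0 -> V0 (f u) -> V0 (f v)).
    { intros u v Hc; induction Hc as [u|u u1 v [_ [[V1 [HV1 V1u1]] duu1]] Hr2 IH]; intros V0 HV0 V0u; auto.
      apply IH; auto. destruct (classic (V1 = V0)) as [<-|Hne]; auto.
      exfalso. pose proof (HUd l Hl V0 V1 HV0 HV1 (fun e => Hne (eq_sym e)) (f u) (f u1) V0u V1u1).
      pose proof (Hf u u1). assert (a * dist u u1 <= a * r) by (apply Rmult_le_compat_l; auto).
      unfold R0 in *; lra. }
    destruct (proj1 Hs) as [V0 [HV0 V0x]].
    pose proof (Hprop x y (Relation_Operators.rt1n_trans _ _ _ _ _ Hs Hr1) V0 HV0 V0x) as V0y.
    pose proof (HUdiam l V0 Hl HV0 (f x) (f y) V0x V0y). unfold R0 in *. nra.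
Qed.


Lemma base_iter (X Y : MetricSpace) (f : X -> Y) a b n :
  0 <= a -> 0 <= b -> (forall x y, dist (f x) (f y) <= a * dist x y + b) ->
  asdimAN_le Y n -> forall j, BaseCol X Y f n (n + j).
Proof.
  intros Ha Hb Hf HY j; induction j.
  - rewrite Nat.add_0_r; apply (base_init X Y f a b n Ha Hb Hf HY).
  - rewrite Nat.add_succ_r; apply (base_step X Y f a b n (n + j) Ha Hb Hf); auto; lia.
Qed.

Lemma fib_iter (X Y : MetricSpace) (f : X -> Y) a b m n :
  0 <= a -> 0 <= b -> (forall x y, dist (f x) (f y) <= a * dist x y + b) ->
  asdimAN_map_le f m -> asdimAN_le Y n -> forall j, FibCol X Y f m (m + j).
Proof.
  intros Ha Hb Hf HM HY j; induction j.
  - rewrite Nat.add_0_r; apply (fib_init X Y f m n HM HY).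
  - rewrite Nat.add_succ_r; apply (fib_step X Y f a b m (m + j) Ha Hb Hf); auto; lia.
Qed.

Theorem mainTheorem5 (X Y : MetricSpace) (f : X -> Y) (m n : nat) :
  asymp_lipschitz f ->
  asdimAN_map_le f m ->
  asdimAN_le Y n ->
  asdimAN_le X (m + n).
Proof.
  intros [a [b [Ha [Hb Hf]]]] HM HY.
  pose proof (base_iter X Y f a b n Ha Hb Hf HY m) as HB. rewrite Nat.add_comm in HB.
  pose proof (fib_iter X Y f a b m n Ha Hb Hf HM HY n) as HF.
  destruct HB as [alB [beB [HalB [HbeB HB]]]].
  destruct HF as [alF [beF [gaF [HalF [HbeF [HgaF HF]]]]]].
  exists (alF + beF * alB), (beF * (beB + 1) + gaF).
  assert (0 <= beF * alB) by (apply Rmult_le_pos; auto).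
  assert (0 <= beF * (beB + 1)) by (apply Rmult_le_pos; lra).
  split; [lra|split; [lra|]]. split.
  { intros r Hr. assert (0 <= (alF + beF * alB) * r) by (apply Rmult_le_pos; lra). lra. }
  intros r Hr.
  set (rho := alB * r + beB + 1).
  assert (Hrho : 0 < rho) by (unfold rho; assert (0 <= alB * r) by (apply Rmult_le_pos; lra); lra).
  destruct (HB r Hr) as [Q [HQm HQb]].
  destruct (HF r rho Hr Hrho) as [C [HCm HCr]].
  set (Xp := fun p x => C p x /\ Q p x).
  set (K := fun p x => fun y => same_r_component (Xp p) r x y).
  assert (Kbound : forall p u v, (p <= m + n)%nat -> same_r_component (Xp p) r u v ->
    dist u v <= (alF + beF * alB) * r + (beF * (beB + 1) + gaF)).
  { intros p u v Hp [Xu [Xv Hc]].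
    set (W := fun w => exists z, clos_refl_trans X (r_step (Q p) r) u z /\ f z = w).
    assert (HW : diam_le W rho).
    { intros w1 w2 [z1 [C1 <-]] [z2 [C2 <-]].
      assert (Hc12 : clos_refl_trans X (r_step (Q p) r) z1 z2) by (eapply rt_trans; [apply crt_sym; exact C1|exact C2]).
      pose proof (HQb p Hp z1 z2 Hc12). unfold rho; lra. }
    assert (Hc2 : clos_refl_trans X (r_step (fun w => C p w /\ W (f w)) r) u v).
    { apply (crt_mono_reach X (Xp p)); auto. intros t Ht Xt. split; [apply Xt|].
      exists t; split; auto. eapply crt_mono; [|apply Rle_refl|exact Ht]. intros w Hw; apply Hw. }
    pose proof (HCr p Hp W HW u v Hc2). unfold rho in *. nra. }
  exists (fun p A => exists x, Xp p x /\ A = K p x). split; [|split].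
  - intros p Hp A B [x0 [X0 ->]] [x1 [X1 ->]] Hne u v Ku Kv.
    apply Rnot_lt_le; intro Hlt. apply Hne.
    apply functional_extensionality; intro y; apply propositional_extensionality.
    destruct Ku as [_ [Xu Cu]]; destruct Kv as [_ [Xv Cv]].
    assert (Cuv : clos_refl_trans X (r_step (Xp p) r) u v) by (apply rt_step; split; [exact Xu|split; [exact Xv|lra]]).
    unfold K, same_r_component; split; intros [Ha1 [Hy Hc]].
    + split; [exact X1|split; [exact Hy|]]. eapply rt_trans; [exact Cv|]. eapply rt_trans; [apply crt_sym; exact Cuv|].
      eapply rt_trans; [apply crt_sym; exact Cu|exact Hc].
    + split; [exact X0|split; [exact Hy|]]. eapply rt_trans; [exact Cu|]. eapply rt_trans; [exact Cuv|].
      eapply rt_trans; [apply crt_sym; exact Cv|exact Hc].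
  - intros p A Hp [x0 [X0 ->]] u v [_ [Xu Cu]] [_ [Xv Cv]].
    apply (Kbound p u v Hp). split; [auto|split; [auto|]].
    eapply rt_trans; [apply crt_sym; exact Cu|exact Cv].
  - intros x.
    assert (Hex : exists p, (p <= m + n)%nat /\ C p x /\ Q p x).
    { apply NNPP; intro Hn.
      pose proof (miss_pigeon (fun l => C l x) (fun l => Q l x) (m + n)
        (fun l Hl HCQ => Hn (ex_intro _ l (conj Hl HCQ)))).
      pose proof (HCm x); pose proof (HQm x); lia. }
    destruct Hex as [p [Hp [Cx Qx]]].
    exists p, (K p x); split; [auto|split].
    + exists x; split; [split; auto|reflexivity].
    + unfold K; split; [split; auto|split; [split; auto|apply rt_refl]].
Qed.
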